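(* Let $\alpha>1$ and let $X=\{x_j:j\in J\}\subset\mathbb{R}^2$ be finite. If $s_2^*$ is equidistant from all points of $X$, then $s_\alpha^*=s_2^*$.
   Context: For $\beta>1$, $s_\beta^*$ denotes the unique minimiser of $P_\beta(s,X)=\sum_{j\in J}\|s-x_j\|^\beta+\max_{j\in J}\|s-x_j\|^\beta$ over $s\in\mathbb{R}^2$. *)

(* Defs.v *)
From mathcomp Require Import all_boot all_order all_algebra.
From mathcomp Require Import all_classical all_reals all_analysis.
Set Implicit Arguments. Unset Strict Implicit. Unset Printing Implicit Defensive.
Import Order.TTheory GRing.Theory Num.Theory.
Local Open Scope ring_scope.

Definition dist2 {R : realType} (s x : R * R) : R :=
  Num.sqrt ((s.1 - x.1) ^+ 2 + (s.2 - x.2) ^+ 2).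

(* P_beta(s, X) = sum_j ||s - x_j||^beta + max_j ||s - x_j||^beta,
   with X given as a family x : J -> R^2 over a finite index type J.
   The max of nonnegative reals is taken with neutral element 0. *)
Definition Pbeta {R : realType} {J : finType} (beta : R) (x : J -> R * R)
    (s : R * R) : R :=
  \sum_(j : J) powR (dist2 s (x j)) beta
  + \big[Num.max/0]_(j : J) powR (dist2 s (x j)) beta.

Definition is_minimiser {R : realType} {J : finType} (beta : R)
    (x : J -> R * R) (s : R * R) : Prop :=
  forall t : R * R, Pbeta beta x s <= Pbeta beta x t.

Definition equidistant {R : realType} {J : finType} (x : J -> R * R)
    (s : R * R) : Prop :=
  exists r : R, forall j : J, dist2 s (x j) = r.

(* Main.v *)
Require Import Defs.
From mathcomp Require Import all_boot all_order all_algebra.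
From mathcomp Require Import all_classical all_reals all_analysis.
From mathcomp Require Import lra ring.
Import Order.TTheory GRing.Theory Num.Theory.
Local Open Scope ring_scope.
Set Implicit Arguments. Unset Strict Implicit.

Lemma bern0 (R : realType) (a q : R) : 1 < a -> 0 <= q ->
  a * q <= powR q a + a - 1 /\ (q != 1 -> a * q < powR q a + a - 1).
Proof.
move=> a1; rewrite le_eqVlt => /predU1P[<-|q0].
  have a0 : a != 0 by rewrite gt_eqF // (lt_trans ltr01).
  rewrite powR0 // mulr0; split => [|_]; lra.
set z := ln q.
have eq : q = expR z by rewrite /z lnK.
have pq : powR q a = expR (a * z) by rewrite /powR gt_eqF.
have e1 : expR (a * z) = expR z * expR ((a - 1) * z).
  by rewrite -expRD; congr expR; ring.
have e2 : expR z * expR (- z) = 1 by rewrite -expRD subrr expR0.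
have ez : 0 < expR z := expR_gt0 z.
have h1 := expR_ge1Dx ((a - 1) * z).
have h2 := expR_ge1Dx (- z).
have k1 : expR z * (1 + (a - 1) * z) <= expR z * expR ((a - 1) * z) by rewrite ler_pM2l.
have k2 : expR z * (1 + - z) <= 1 by rewrite -[X in _ <= X]e2 ler_pM2l.
have k3 : 0 <= (a - 1) * (1 - (expR z * (1 + - z))) by apply: mulr_ge0; lra.
rewrite pq e1 {1 3}eq; split.
  nra.
move=> qn1; have z0 : z != 0.
  by apply: contra qn1 => /eqP z0; rewrite eq z0 expR0.
have h3 : (a - 1) * z != 0 by rewrite mulf_neq0 // subr_eq0 gt_eqF.
have h1' := expR_gt1Dx h3.
have h2' : - z != 0 by rewrite oppr_eq0.
have h2'' := expR_gt1Dx h2'.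
have k1' : expR z * (1 + (a - 1) * z) < expR z * expR ((a - 1) * z) by rewrite ltr_pM2l.
nra.
Qed.

Lemma bern (R : realType) (a r d : R) : 1 < a -> 0 < r -> 0 <= d ->
  powR r a + a * (powR r a / r) * (d - r) <= powR d a /\
  (d != r -> powR r a + a * (powR r a / r) * (d - r) < powR d a).
Proof.
move=> a1 r0 d0.
have q0 : 0 <= d / r by rewrite divr_ge0 // ltW.
have [h1 h2] := bern0 a1 q0.
have eqd : d = (d / r) * r by rewrite divfK ?gt_eqF.
have P0 : 0 < powR r a by rewrite powR_gt0.
have pd : powR d a = powR (d / r) a * powR r a by rewrite {1}eqd powRM // ltW.
have ex : powR r a + a * (powR r a / r) * (d - r) = powR r a * (1 + a * (d / r) - a).
  by field; rewrite gt_eqF.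
rewrite pd ex; split.
  rewrite mulrC ler_pM2r //; lra.
move=> dr; rewrite mulrC ltr_pM2r //.
have : d / r != 1.
  by apply: contra dr => /eqP h; rewrite eqd h mul1r.
move=> /h2; lra.
Qed.

Lemma keyineq (R : realType) (a r u1 u2 w1 w2 : R) : 1 < a -> 0 < r ->
  u1 ^+ 2 + u2 ^+ 2 = r ^+ 2 ->
  powR r a - a * (powR r a / r ^+ 2) * (w1 * u1 + w2 * u2)
    <= powR (Num.sqrt ((w1 - u1) ^+ 2 + (w2 - u2) ^+ 2)) a /\
  ((w1 != 0) || (w2 != 0) ->
  powR r a - a * (powR r a / r ^+ 2) * (w1 * u1 + w2 * u2)
    < powR (Num.sqrt ((w1 - u1) ^+ 2 + (w2 - u2) ^+ 2)) a).
Proof.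
move=> a1 r0 hu.
set d := Num.sqrt _.
have d0 : 0 <= d := sqrtr_ge0 _.
have dd : d ^+ 2 = (w1 - u1) ^+ 2 + (w2 - u2) ^+ 2 by rewrite sqr_sqrtr // addr_ge0 // sqr_ge0.
have [b1 b2] := bern a1 r0 d0.
have P0 : 0 < powR r a by rewrite powR_gt0.
set P := powR r a in b1 b2 P0 *.
set v := w1 * u1 + w2 * u2.
have cs : r ^+ 2 - v <= r * d.
  have sq : (r ^+ 2 - v) ^+ 2 <= (r * d) ^+ 2.
    rewrite exprMn dd -hu /v -subr_ge0.
    have -> : (u1 ^+ 2 + u2 ^+ 2) * ((w1 - u1) ^+ 2 + (w2 - u2) ^+ 2) -
      (u1 ^+ 2 + u2 ^+ 2 - (w1 * u1 + w2 * u2)) ^+ 2 = (u1 * (u2 - w2) - u2 * (u1 - w1)) ^+ 2 by ring.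
    exact: sqr_ge0.
  have rd0 : 0 <= r * d by rewrite mulr_ge0 // ltW.
  nra.
have K0 : 0 < a * (P / r ^+ 2) by rewrite mulr_gt0 ?divr_gt0 ?exprn_gt0 //; lra.
have ex : a * (P / r) * (d - r) = a * (P / r ^+ 2) * (r * d - r ^+ 2).
  by field; rewrite gt_eqF.
rewrite ex in b1 b2.
have m1 : a * (P / r ^+ 2) * (- v) <= a * (P / r ^+ 2) * (r * d - r ^+ 2).
  rewrite ler_pM2l //; lra.
split; first lra.
move=> wn0.
have [dr|dr] := eqVneq d r; last first.
  have := b2 dr; lra.
have vpos : 0 < v.
  have : 0 < w1 ^+ 2 + w2 ^+ 2.
    have s1 := sqr_ge0 w1; have s2 := sqr_ge0 w2.
    case/orP: wn0 => h.
      have : 0 < w1 ^+ 2 by rewrite lt_def sqrf_eq0 h sqr_ge0.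
      lra.
    have : 0 < w2 ^+ 2 by rewrite lt_def sqrf_eq0 h sqr_ge0.
    lra.
  move: dd; rewrite dr -hu /v; nra.
have m2 : a * (P / r ^+ 2) * (- v) < a * (P / r ^+ 2) * (r * d - r ^+ 2).
  rewrite ltr_pM2l // dr; lra.
lra.
Qed.

Lemma argmin_ex (R : realType) (J : finType) (j0 : J) (F : J -> R) :
  exists k, forall j, F k <= F j.
Proof.
case: (@arg_minP _ _ J j0 predT F isT) => k _ h; exists k => j; exact: h.
Qed.

Lemma sum_aff (R : realType) (J : finType) (A B : R) (v : J -> R) :
  \sum_(j : J) (A + B * v j) = #|J|%:R * A + B * \sum_(j : J) v j.
Proof. by rewrite big_split /= sumr_const -mulr_sumr mulr_natl. Qed.

Lemma hasJ (J : finType) (j0 : J) : has predT (index_enum J).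
Proof. by apply/hasP; exists j0 => //; rewrite mem_index_enum. Qed.

Unset Implicit Arguments.

Theorem proposition6 (R : realType) (J : finType) (j0 : J)
    (x : J -> R * R) (alpha : R) (s2 salpha : R * R) :
  1 < alpha ->
  is_minimiser 2 x s2 ->
  equidistant x s2 ->
  is_minimiser alpha x salpha ->
  salpha = s2.
Proof.
move=> a1 min2 [r hr] mina.
case: s2 min2 hr mina => c1 c2 min2 hr.
case: salpha => t1 t2 mina.
set u1 := fun j => (x j).1 - c1.
set u2 := fun j => (x j).2 - c2.
have r0 : 0 <= r by rewrite -(hr j0) /dist2 sqrtr_ge0.
have hu : forall j, u1 j ^+ 2 + u2 j ^+ 2 = r ^+ 2.
  move=> j; rewrite -(hr j) /dist2 sqr_sqrtr /=; last by rewrite addr_ge0 // sqr_ge0.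
  rewrite /u1 /u2; ring.
have N0 : (0 : R) <= #|J|%:R by [].
have stepA : forall w1 w2 k, (forall j, w1 * u1 k + w2 * u2 k <= w1 * u1 j + w2 * u2 j) ->
    \sum_(j : J) (w1 * u1 j + w2 * u2 j) + (w1 * u1 k + w2 * u2 k) <= 0.
  move=> w1 w2 k hk.
  set S := _ + _.
  set W := w1 ^+ 2 + w2 ^+ 2.
  have W0 : 0 <= W by rewrite addr_ge0 // sqr_ge0.
  have key : forall eps : R, 0 < eps -> 2 * S <= (#|J|%:R + 1) * eps * W.
    move=> eps e0.
    have := min2 (c1 + eps * w1, c2 + eps * w2).
    have fj : forall j, powR (dist2 (c1 + eps * w1, c2 + eps * w2) (x j)) 2
        = (r ^+ 2 + eps ^+ 2 * W) + (- 2 * eps) * (w1 * u1 j + w2 * u2 j).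
      move=> j; rewrite /dist2 /= powR_mulrn ?sqrtr_ge0 //.
      rewrite sqr_sqrtr ?addr_ge0 ?sqr_ge0 // -(hu j) /W /u1 /u2; ring.
    have f0 : forall j, powR (dist2 (c1, c2) (x j)) 2 = r ^+ 2.
      by move=> j; rewrite hr powR_mulrn.
    rewrite /Pbeta.
    under eq_bigr do rewrite f0.
    under [X in _ <= X + _]eq_bigr do rewrite fj.
    rewrite sum_aff sumr_const.
    have m0 : \big[Num.max/0]_(j : J) powR (dist2 (c1, c2) (x j)) 2 = r ^+ 2.
      apply/le_anti/andP; split.
        by apply: bigmax_le => [|j _]; rewrite ?f0 ?sqr_ge0.
      by rewrite -(f0 j0) le_bigmax.
    have m1 : \big[Num.max/0]_(j : J) powR (dist2 (c1 + eps * w1, c2 + eps * w2) (x j)) 2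
        <= (r ^+ 2 + eps ^+ 2 * W) + (- 2 * eps) * (w1 * u1 k + w2 * u2 k).
      apply: bigmax_le => [|j _].
        by rewrite -fj powR_ge0.
      rewrite fj lerD2l; have := hk j; nra.
    rewrite m0 -[r ^+ 2 *+ _]mulr_natl (_ : #|xpredT| = #|J|) // ?mulr1.
    move: m1; set M := \big[_/_]_(_ : J) _ => m1 hle.
    have : 2 * eps * S <= (#|J|%:R + 1) * eps ^+ 2 * W.
      rewrite /S; nra.
    rewrite expr2 => h.
    have : eps * (2 * S) <= eps * ((#|J|%:R + 1) * eps * W) by lra.
    by rewrite (ler_pM2l e0).
  rewrite leNgt; apply/negP => S0.
  set A := (#|J|%:R + 1) * W.
  have A0 : 0 <= A by rewrite mulr_ge0 //; lra.
  have e0 : 0 < S / (A + 1) by rewrite divr_gt0 //; lra.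
  have hA : 0 < A + 1 by lra.
  have := key _ e0.
  have -> : (#|J|%:R + 1) * (S / (A + 1)) * W = S * (A / (A + 1)).
    by move: hA; rewrite /A => hA; field; exact: lt0r_neq0.
  have : A / (A + 1) < 1 by rewrite ltr_pdivrMr // mul1r; lra.
  move=> h1 h2.
  have : S * (A / (A + 1)) <= S by apply: ler_piMr; [lra | exact: ltW h1].
  lra.
set w1 := t1 - c1; set w2 := t2 - c2.
have dt : forall j, dist2 (t1, t2) (x j) = Num.sqrt ((w1 - u1 j) ^+ 2 + (w2 - u2 j) ^+ 2).
  by move=> j; rewrite /dist2 /w1 /w2 /u1 /u2 /=; congr Num.sqrt; ring.
have [/andP [/eqP e1 /eqP e2] | wn0] := boolP ((w1 == 0) && (w2 == 0)).
  by move: e1 e2; rewrite /w1 /w2 => e1 e2; congr pair; lra.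
rewrite negb_and in wn0.
have Pc : Pbeta alpha x (c1, c2) = #|J|%:R * powR r alpha + powR r alpha.
  rewrite /Pbeta.
  under eq_bigr do rewrite hr.
  under [X in _ + X]eq_bigr do rewrite hr.
  rewrite sumr_const mulr_natl (_ : #|xpredT| = #|J|) //; congr (_ + _).
  apply/le_anti/andP; split.
    by apply: bigmax_le => [|j _]; rewrite ?powR_ge0.
  by rewrite (le_bigmax _ (fun _ => powR r alpha) j0).
have := mina (c1, c2); rewrite Pc /Pbeta.
have [rz|rp] := eqVneq r 0.
  move=> hle; exfalso.
  have uz : forall j, u1 j = 0 /\ u2 j = 0.
    move=> j; have := hu j; rewrite rz expr0n /= => h.
    have s1 := sqr_ge0 (u1 j); have s2 := sqr_ge0 (u2 j).
    have a : u1 j ^+ 2 = 0 by lra.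
    have b : u2 j ^+ 2 = 0 by lra.
    by move/eqP: a; move/eqP: b; rewrite !sqrf_eq0 => /eqP -> /eqP ->.
  have a0 : alpha != 0 by rewrite gt_eqF //; lra.
  rewrite rz powR0 // mulr0 addr0 in hle.
  have dpos : 0 < dist2 (t1, t2) (x j0).
    rewrite dt; case: (uz j0) => -> ->; rewrite !subr0 sqrtr_gt0.
    have s1 := sqr_ge0 w1; have s2 := sqr_ge0 w2.
    case/orP: wn0 => h.
      have : 0 < w1 ^+ 2 by rewrite lt_def sqrf_eq0 h sqr_ge0.
      lra.
    have : 0 < w2 ^+ 2 by rewrite lt_def sqrf_eq0 h sqr_ge0.
    lra.
  have g0 := powR_gt0 alpha dpos.
  have sge : powR (dist2 (t1, t2) (x j0)) alpha <= \sum_(j : J) powR (dist2 (t1, t2) (x j)) alpha.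
    rewrite (bigD1 j0) //= lerDl; apply: sumr_ge0 => j _; exact: powR_ge0.
  have mge : 0 <= \big[Num.max/0]_(j : J) powR (dist2 (t1, t2) (x j)) alpha.
    exact: bigmax_ge_id.
  lra.
have rpos : 0 < r by rewrite lt_def rp.
have [k hk] := argmin_ex j0 (fun j => w1 * u1 j + w2 * u2 j).
have sA := stepA w1 w2 k hk.
set P := powR r alpha.
set K := alpha * (P / r ^+ 2).
have P0 : 0 < P by rewrite powR_gt0.
have K0 : 0 < K by rewrite mulr_gt0 ?divr_gt0 ?exprn_gt0 //; lra.
have lt : forall j, P + (- K) * (w1 * u1 j + w2 * u2 j) < powR (dist2 (t1, t2) (x j)) alpha.
  move=> j; rewrite dt; have [_ h] := @keyineq R alpha r (u1 j) (u2 j) w1 w2 a1 rpos (hu j).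
  have := h wn0; rewrite -/P -/K; lra.
have sum_lt : \sum_(j : J) (P + (- K) * (w1 * u1 j + w2 * u2 j))
    < \sum_(j : J) powR (dist2 (t1, t2) (x j)) alpha.
  by apply: ltr_sum; [exact: hasJ j0 | move=> j _; exact: lt].
rewrite sum_aff in sum_lt.
have mk : P + (- K) * (w1 * u1 k + w2 * u2 k)
    <= \big[Num.max/0]_(j : J) powR (dist2 (t1, t2) (x j)) alpha.
  apply: le_trans (ltW (lt k)) _.
  exact: (le_bigmax _ (fun j => powR (dist2 (t1, t2) (x j)) alpha) k).
move=> hle.
have : 0 <= K * (- (\sum_(j : J) (w1 * u1 j + w2 * u2 j) + (w1 * u1 k + w2 * u2 k))).
  by apply: mulr_ge0; [exact: ltW | rewrite oppr_ge0].
exfalso; nra.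
Qed.
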